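(* Let $X\in\mathbb{R}^{n\times r}$ have linearly independent columns and let $A\in\mathbb{R}^{r\times r}$ be skewsymmetric. Then $\det(A+X^\top X)>0$. Moreover, the function on subsets $\mathtt{C}\subseteq\{1,\dots,n\}$ given by $$p(\mathtt{C})=\frac{1}{\det(A+X^\top X)}\det\begin{bmatrix}0_{|\mathtt{C}|}&X_{\mathtt{C}:}\\-(X_{\mathtt{C}:})^\top&A\end{bmatrix}$$ is a probability mass function on the subsets of $\{1,\dots,n\}$. That is, $p(\mathtt{C})\ge0$ for all $\mathtt{C}$ and $\sum_{\mathtt{C}}p(\mathtt{C})=1$. For $\mathtt{C}=\emptyset$ the matrix is understood as $A$.
   Context: $X_{\mathtt{C}:}$ is the submatrix of $X$ with rows indexed by $\mathtt{C}$ in increasing order. $0_m$ is the $m\times m$ zero matrix. *)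

(* Defs.v *)
From mathcomp Require Import all_boot all_order all_algebra.
Set Implicit Arguments. Unset Strict Implicit. Unset Printing Implicit Defensive.
Import Order.TTheory GRing.Theory Num.Theory.
Local Open Scope ring_scope.

(* X_{C:} : rows of X indexed by C, in increasing order (enum of a set of
   ordinals lists them increasingly). *)
Definition subrows (R : Type) (n r : nat) (C : {set 'I_n}) (X : 'M[R]_(n, r))
  : 'M[R]_(#|C|, r) :=
  \matrix_(i < #|C|, j < r) X (enum_val i) j.

Definition pblock (R : nzRingType) (n r : nat) (C : {set 'I_n})
  (X : 'M[R]_(n, r)) (A : 'M[R]_r) : 'M[R]_(#|C| + r) :=
  block_mx (0 : 'M[R]_#|C|) (subrows C X) (- (subrows C X)^T) A.

Definition pmf (R : fieldType) (n r : nat) (X : 'M[R]_(n, r)) (A : 'M[R]_r)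
  (C : {set 'I_n}) : R :=
  \det (pblock C X A) / \det (A + X^T *m X).

(* Main.v *)
Require Import Defs.
From mathcomp Require Import all_boot all_order all_algebra.
From mathcomp Require Import ring lra.
Set Implicit Arguments. Unset Strict Implicit. Unset Printing Implicit Defensive.
Import Order.TTheory GRing.Theory Num.Theory.
Local Open Scope ring_scope.

Lemma poly_pos0 (R : realFieldType) (p : {poly R}) :
  (forall e, 0 < e -> 0 < p.[e]) -> 0 <= p.[0].
Proof.
move=> Hp; rewrite horner_coef0; rewrite leNgt; apply/negP => c_lt0.
set c := p`_0 in c_lt0.
pose B := \sum_(i < size p) `|p`_i|.
have B_ge0 : 0 <= B by apply: sumr_ge0 => i _; exact: normr_ge0.
pose e := Num.min 1 (- c / (2 * (B + 1))).
have B1 : 0 < B + 1 by lra.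
have e_gt0 : 0 < e.
  rewrite lt_min ltr01 /=; apply: divr_gt0; lra.
have e_le1 : e <= 1 by rewrite ge_min lexx.
have e_le : e * (B + 1) <= - c / 2.
  have : e <= - c / (2 * (B + 1)) by rewrite ge_min lexx orbT.
  rewrite -(ler_pM2r B1) => /le_trans; apply.
  have B1' : B + 1 != 0 by rewrite gt_eqF.
  by have -> : - c / (2 * (B + 1)) * (B + 1) = - c / 2 by field; rewrite B1'.
have bound : p.[e] <= c + e * B.
  rewrite horner_coef.
  have -> : c + e * B = \sum_(i < size p) ((nat_of_ord i == 0%N)%:R * p`_i + e * `|p`_i|).
    rewrite big_split /= -mulr_sumr; congr (_ + _).
    case: (ltnP 0 (size p)) => [sp|sp].
      rewrite (bigD1 (Ordinal sp)) //= mul1r big1 ?addr0 // => i /negP Hi.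
      case: eqP => [Hi0|]; last by rewrite mul0r.
      by exfalso; apply: Hi; apply/eqP/val_inj.
    rewrite big1 ?/c ?nth_default // => -[i Hi] _.
    by move: (leq_trans Hi sp).
  apply: ler_sum => -[[|j] Hj] _ /=.
    rewrite expr0 mulr1 mul1r; have := normr_ge0 p`_0; nra.
  idtac.
  have h1 : p`_j.+1 * e ^+ j.+1 <= `|p`_j.+1| * e ^+ j.+1.
    apply: ler_wpM2r; first by apply: exprn_ge0; exact: ltW.
    exact: ler_norm.
  have h2 : e ^+ j <= 1 by apply: exprn_ile1 => //; exact: ltW.
  have h3 : 0 <= e ^+ j by apply: exprn_ge0; exact: ltW.
  have h4 : e * e ^+ j <= e by rewrite -[X in _ <= X]mulr1; apply: ler_wpM2l => //; exact: ltW.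
  have h5 : `|p`_j.+1| * (e * e ^+ j) <= `|p`_j.+1| * e by apply: ler_wpM2l => //.
  rewrite exprS in h1 *; have h6 := le_trans h1 h5; apply: (le_trans h6); rewrite [_ * e]mulrC -[X in X <= _]add0r lerD2r mul0r ?lexx //.
have := Hp e e_gt0; nra.
Qed.

Definition qf (R : ringType) m (N : 'M[R]_m) (x : 'cV[R]_m) : R := (x^T *m N *m x) 0 0.

Lemma mx11_mulE (R : ringType) (P : 'M[R]_1) (Q : 'M[R]_1) : (P *m Q) 0 0 = P 0 0 * Q 0 0.
Proof. by rewrite mxE big_ord1. Qed.

Lemma sumsq_pos (R : realFieldType) m (x : 'cV[R]_m) : x != 0 -> 0 < (x^T *m x) 0 0.
Proof.
move=> xn0; rewrite mxE lt_def; apply/andP; split; last first.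
  by apply: sumr_ge0 => i _; rewrite mxE -expr2 sqr_ge0.
apply/negP => /eqP H; move/negP: xn0; apply; apply/eqP/matrixP => i j.
rewrite (ord1 j) mxE.
have Hge : forall k : 'I_m, true -> 0 <= x^T 0 k * x k 0.
  by move=> k _; rewrite mxE -expr2 sqr_ge0.
have := psumr_eq0P Hge H (i:=i) isT.
by move=> /eqP; rewrite mxE -expr2 sqrf_eq0 => /eqP.
Qed.

Lemma pd_det (R : realFieldType) m (N : 'M[R]_m) :
  (forall x, x != 0 -> 0 < qf N x) -> 0 < \det N.
Proof.
elim: m N => [|m IH] N HN; first by rewrite det_mx00 ltr01.
have NE : N = block_mx (ulsubmx (N : 'M_(1 + m))) (ursubmx (N : 'M_(1 + m)))
   (dlsubmx (N : 'M_(1 + m))) (drsubmx (N : 'M_(1 + m))) by rewrite submxK.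
move: HN; rewrite NE.
set a := ulsubmx _; set b := ursubmx _; set c := dlsubmx _; set D := drsubmx _.
move=> HN.
have qfE : forall t y, qf (block_mx a b c D) (col_mx t%:M y) =
   t * t * a 0 0 + t * (y^T *m c) 0 0 + t * (b *m y) 0 0 + (y^T *m D *m y) 0 0.
  move=> t y; rewrite /qf tr_col_mx tr_scalar_mx mul_row_block mul_row_col.
  rewrite !mulmxDl !mul_scalar_mx !mul_mx_scalar -!scalemxAl !mxE.
  by ring.
pose al := a 0 0.
have al_gt0 : 0 < al.
  have := HN (col_mx (1%:M : 'M[R]_1) (0 : 'cV[R]_m)); rewrite qfE.
  rewrite trmx0 !mul0mx !mulmx0 !mxE !mulr0 !addr0 !mul1r => H.
  have H1 : col_mx (1%:M : 'M[R]_1) (0 : 'cV[R]_m) != 0.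
    rewrite col_mx_eq0 negb_and; apply/orP; left; apply/eqP => /matrixP/(_ 0 0).
    by rewrite !mxE /= => /eqP; rewrite oner_eq0.
  apply: (lt_le_trans (H H1)); rewrite /al /a /ulsubmx /usubmx /lsubmx !mxE.
  done.
pose S := D - al^-1 *: (c *m b).
have detE : \det (block_mx a b c D) = al * \det S.
  have -> : block_mx a b c D =
     block_mx 1%:M 0 (al^-1 *: c) 1%:M *m block_mx a b 0 S.
    rewrite mulmx_block !mul1mx !mul0mx !addr0.
    have ca : c *m a = al *: c by rewrite {1}[a]mx11_scalar mul_mx_scalar.
    rewrite -scalemxAl ca scalerA mulVf; last exact: lt0r_neq0 al_gt0.
    rewrite scale1r.
    by rewrite /S -scalemxAl addrC subrK.
  by rewrite det_mulmx det_lblock det_ublock !det1 !mul1r det_mx11 //.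
rewrite detE; apply: mulr_gt0 => //; apply: IH => y yn0.
pose t := - (b *m y) 0 0 / al.
have := HN (col_mx (t%:M : 'M[R]_1) y); rewrite qfE.
have -> : qf S y = t * t * a 0 0 + t * (y^T *m c) 0 0 + t * (b *m y) 0 0 + (y^T *m D *m y) 0 0.
  rewrite /qf /S mulmxBr mulmxBl -scalemxAr -scalemxAl.
  rewrite mxE [X in _ + X]mxE [X in _ - X]mxE.
  rewrite -!mulmxA [y^T *m (c *m _)]mulmxA mx11_mulE.
  rewrite /t -/al; field; exact: lt0r_neq0 al_gt0.
apply; apply/negP => /eqP H0; have := congr1 (@dsubmx R 1 m 1) H0; rewrite col_mxKd => y0.
move/negP: yn0; apply; rewrite y0; apply/eqP/matrixP => i j; rewrite !mxE.
done.
Qed.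

Lemma mx_addE (R : ringType) m k (A B : 'M[R]_(m, k)) i j : (A + B) i j = A i j + B i j.
Proof. by rewrite mxE. Qed.
Lemma mx_oppE (R : ringType) m k (A : 'M[R]_(m, k)) i j : (- A) i j = - A i j.
Proof. by rewrite mxE. Qed.
Lemma mx_scaleE (R : ringType) m k (a : R) (A : 'M[R]_(m, k)) i j : (a *: A) i j = a * A i j.
Proof. by rewrite mxE. Qed.

Lemma psd_det (R : realFieldType) m (N : 'M[R]_m) :
  (forall x, 0 <= qf N x) -> 0 <= \det N.
Proof.
move=> HN.
pose p : {poly R} := \det (map_mx polyC N + 'X%:M).
have pE : forall e, p.[e] = \det (N + e%:M).
  move=> e; rewrite /p -horner_evalE -det_map_mx; congr (\det _).
  apply/matrixP => i j; rewrite !mxE /= horner_evalE hornerD hornerC hornerMn hornerX.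
  done.
have := @poly_pos0 R p; rewrite pE.
have -> : N + 0%:M = N by apply/matrixP => i j; rewrite !mxE mul0rn addr0.
apply => e e_gt0; rewrite pE; apply: pd_det => x xn0.
rewrite /qf mulmxDr mulmxDl mul_mx_scalar -scalemxAl mx_addE mx_scaleE.
have := HN x; have := sumsq_pos xn0; rewrite /qf; nra.
Qed.

Lemma mx_trE (R : ringType) m k (A : 'M[R]_(m, k)) i j : A^T i j = A j i.
Proof. by rewrite mxE. Qed.

Lemma skew_qf (R : realFieldType) m (M : 'M[R]_m) x : M^T = - M -> qf M x = 0.
Proof.
move=> HM.
have h1 : qf M^T x = qf M x.
  rewrite /qf; have -> : x^T *m M^T *m x = (x^T *m M *m x)^T.
    by rewrite !trmx_mul trmxK mulmxA.
  by rewrite mx_trE.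
have h2 : qf (- M) x = - qf M x by rewrite /qf mulmxN mulNmx mx_oppE.
rewrite HM h2 in h1; lra.
Qed.

Lemma skew_det (R : realFieldType) m (M : 'M[R]_m) : M^T = - M -> 0 <= \det M.
Proof. by move=> HM; apply: psd_det => x; rewrite skew_qf. Qed.

Lemma det_del (R : comRingType) N (M : 'M[R]_N) m (f : 'I_m -> 'I_N) :
  injective f -> (forall i, i \notin codom f -> forall j, M i j = (i == j)%:R) ->
  \det M = \det (mxsub f f M).
Proof.
elim: N M m f => [|N IH] M m f finj Hrow.
  case: m f finj {Hrow} => [|m] f finj; first by rewrite !det_mx00.
  by case: (f ord0).
case: (pickP (fun i => i \notin codom f)) => [i0 Hi0 | Hall].
  rewrite (expand_det_row M i0) (bigD1 i0) //= big1 => [|j Hj]; last first.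
    by rewrite Hrow // eq_sym (negbTE Hj) mul0r.
  rewrite Hrow // eqxx mul1r addr0 /cofactor -signr_odd oddD addbb expr0 mul1r.
  have fi : forall i, i0 != f i.
    by move=> i; apply/eqP => E; move/negP: Hi0; apply; rewrite E codom_f.
  pose g i := s2val (unlift_some (fi i)).
  have gE : forall i, lift i0 (g i) = f i.
    by move=> i; rewrite /g; case: (unlift_some (fi i)) => /= k <-.
  have ginj : injective g.
    by move=> i j /(congr1 (lift i0)); rewrite !gE => /finj.
  rewrite (IH _ m g ginj).
    by congr (\det _); apply/matrixP => i j; rewrite !mxE !gE.
  move=> k Hk j; rewrite !mxE.
  have Hk' : lift i0 k \notin codom f.
    apply/negP => /codomP [i Hi]; move/negP: Hk; apply.
    by apply/codomP; exists i; apply: (@lift_inj _ i0); rewrite gE.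
  by rewrite Hrow // (inj_eq (@lift_inj _ i0)).
have Em : m = N.+1.
  rewrite -(card_ord m) -(card_codom finj) -[RHS](card_ord N.+1).
  apply: eq_card => i; rewrite inE; have := Hall i; rewrite /= => /negbFE ->.
  by [].
subst m.
pose s := perm.perm finj.
have -> : mxsub f f M = row_perm s (col_perm s M).
  by apply/matrixP => i j; rewrite !mxE !perm.permE.
rewrite row_permE col_permE !det_mulmx !det_perm perm.odd_permV.
by rewrite mulrCA -signr_addb addbb expr0 mulr1.
Qed.

Lemma prod_sum_sets (R : comRingType) (I : finType) (u v : I -> R) :
  \prod_i (u i + v i) = \sum_(C : {set I}) \prod_i (if i \in C then u i else v i).
Proof.
have -> : \prod_i (u i + v i) = \prod_i \sum_(b : bool) (if b then u i else v i).
  by apply: eq_bigr => i _; rewrite big_bool.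
rewrite bigA_distr_bigA /=.
rewrite (reindex (fun C : {set I} => [ffun i => i \in C])) /=.
  by apply: eq_bigr => C _; apply: eq_bigr => i _; rewrite ffunE.
exists (fun f : {ffun I -> bool} => [set i | f i]) => [C _ | f _].
  by apply/setP => i; rewrite inE ffunE.
by apply/ffunP => i; rewrite ffunE inE.
Qed.

Lemma split_lshift m k (a : 'I_m) : split (lshift k a) = inl a.
Proof. exact: (unsplitK (inl _ a)). Qed.
Lemma split_rshift m k (a : 'I_k) : split (rshift m a) = inr a.
Proof. exact: (unsplitK (inr _ a)). Qed.

Definition Qmx (R : ringType) n r (C : {set 'I_n}) (X : 'M[R]_(n, r)) (A : 'M[R]_r)
  : 'M[R]_(n + r) :=
  block_mx (\matrix_(i, j) ((i == j) && (i \notin C))%:R)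
           (\matrix_(i, j) ((i \in C)%:R * X i j)) (- X^T) A.

Lemma detQ (R : comRingType) n r (C : {set 'I_n}) (X : 'M[R]_(n, r)) (A : 'M[R]_r) :
  \det (Qmx C X A) = \det (Defs.pblock C X A).
Proof.
pose f (k : 'I_(#|C| + r)) : 'I_(n + r) :=
  match split k with inl a => lshift r (enum_val a) | inr b => rshift n b end.
have fl : forall a, f (lshift r a) = lshift r (enum_val a).
  by move=> a; rewrite /f split_lshift.
have fr : forall b, f (rshift #|C| b) = rshift n b.
  by move=> b; rewrite /f split_rshift.
have finj : injective f.
  move=> i j; case: (split_ordP i) => a ->; case: (split_ordP j) => b ->;
    rewrite ?fl ?fr.
  - by move/lshift_inj/enum_val_inj => ->.
  - move/(congr1 val) => /= E; move: (ltn_ord (enum_val a)).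
    by rewrite E ltnNge leq_addr.
  - move/(congr1 val) => /= E; move: (ltn_ord (enum_val b)).
    by rewrite -E ltnNge leq_addr.
  - by move/rshift_inj => ->.
rewrite (det_del (f := f)) //; last first.
  move=> i Hi j; case: (split_ordP i) Hi => a -> Hi.
    have aC : a \notin C.
      apply/negP => aC; move/negP: Hi; apply; apply/codomP.
      by exists (lshift r (enum_rank_in aC a)); rewrite fl enum_rankK_in.
    case: (split_ordP j) => b ->.
      by rewrite /Qmx block_mxEul mxE aC andbT (inj_eq (@lshift_inj _ _)).
    rewrite /Qmx block_mxEur mxE (negbTE aC) mul0r.
    suff -> : (lshift r a == rshift n b) = false by [].
    apply/negP => /eqP/(congr1 val) /= E; move: (ltn_ord a).
    by rewrite E ltnNge leq_addr.
  by move/negP: Hi => []; apply/codomP; exists (rshift #|C| a); rewrite fr.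
congr (\det _); apply/matrixP => i j.
rewrite mxE /Qmx /Defs.pblock.
case: (split_ordP i) => a ->; case: (split_ordP j) => b ->; rewrite ?fl ?fr.
- rewrite block_mxEul block_mxEul !mxE (enum_valP a) andbF; done.
- by rewrite block_mxEur block_mxEur !mxE (enum_valP a) mul1r.
- by rewrite block_mxEdl block_mxEdl !mxE.
- by rewrite block_mxEdr block_mxEdr.
Qed.

Lemma sumQ (R : comRingType) n r (X : 'M[R]_(n, r)) (A : 'M[R]_r) :
  \sum_(C : {set 'I_n}) \det (Qmx C X A) = \det (block_mx 1%:M X (- X^T) A).
Proof.
rewrite /determinant exchange_big /=; apply: eq_bigr => s _; rewrite -mulr_sumr.
congr (_ * _).
rewrite big_split_ord.
have low : forall C j k, Qmx C X A (rshift n j) k = block_mx 1%:M X (- X^T) A (rshift n j) k.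
  move=> C j k; case: (split_ordP k) => b ->.
    by rewrite /Qmx !block_mxEdl.
  by rewrite /Qmx !block_mxEdr.
have top : forall i k, block_mx 1%:M X (- X^T) A (lshift r i) k =
   Qmx setT X A (lshift r i) k + Qmx set0 X A (lshift r i) k.
  move=> i k; case: (split_ordP k) => b ->.
    by rewrite /Qmx !block_mxEul !mxE in_setT in_set0 andbF andbT add0r.
  by rewrite /Qmx !block_mxEur !mxE in_setT in_set0 mul1r mul0r addr0.
have topC : forall C i k, Qmx C X A (lshift r i) k =
   if i \in C then Qmx setT X A (lshift r i) k else Qmx set0 X A (lshift r i) k.
  move=> C i k; case: ifP => iC; case: (split_ordP k) => b ->;
    by rewrite /Qmx ?block_mxEul ?block_mxEur !mxE ?in_setT ?in_set0 ?iC ?andbT ?andbF.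
rewrite (eq_bigr _ (fun i _ => top i _)).
rewrite prod_sum_sets /= mulr_suml; apply: eq_bigr => C _.
rewrite big_split_ord; congr (_ * _).
  by apply: eq_bigr => i _; rewrite topC.
by apply: eq_bigr => j _; rewrite low.
Qed.

Lemma detB (R : comRingType) n r (X : 'M[R]_(n, r)) (A : 'M[R]_r) :
  \det (block_mx 1%:M X (- X^T) A) = \det (A + X^T *m X).
Proof.
have -> : block_mx 1%:M X (- X^T) A =
    block_mx 1%:M 0 (- X^T) 1%:M *m block_mx 1%:M X 0 (A + X^T *m X).
  rewrite mulmx_block !mul1mx !mul0mx !mulmx1 !addr0.
  by rewrite mulNmx addrCA addNr addr0.
by rewrite det_mulmx det_lblock det_ublock !det1 !mul1r.
Qed.
Unset Implicit Arguments.

Theorem mainTheorem6 (R : realFieldType) (n r : nat)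
  (X : 'M[R]_(n, r)) (A : 'M[R]_r)
  (hX : row_free X^T) (hA : A^T = - A) :
  0 < \det (A + X^T *m X) /\
  (forall C : {set 'I_n}, 0 <= pmf X A C) /\
  \sum_(C : {set 'I_n}) pmf X A C = 1.
Proof.
have hdet : 0 < \det (A + X^T *m X).
  apply: pd_det => x xn0.
  rewrite /qf mulmxDr mulmxDl mx_addE.
  have -> : (x^T *m A *m x) 0 0 = 0 by exact: (skew_qf x hA).
  rewrite add0r mulmxA -trmx_mul -mulmxA; apply: sumsq_pos.
  apply/negP => /eqP Hx; move/negP: xn0; apply; apply/eqP.
  have : x^T *m X^T = 0 *m X^T by rewrite -trmx_mul Hx trmx0 mul0mx.
  by move/(row_free_inj hX) => /(congr1 trmx); rewrite trmxK trmx0.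
split => //; split.
  move=> C; rewrite /pmf; apply: divr_ge0; last exact: ltW.
  apply: skew_det; rewrite /Defs.pblock tr_block_mx opp_block_mx trmx0 oppr0 hA.
  by rewrite !linearN /= trmxK opprK.
rewrite /pmf -mulr_suml.
under eq_bigr do rewrite -detQ.
by rewrite sumQ detB divff // gt_eqF.
Qed.
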